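(* Let $\mathbf{A}\in\mathbb{R}^{m\times n}$ with $\|\mathbf{A}\|_\infty\le1$, let $\rho>0$, and let $r(x,y)=\rho\sum_{i\in[m]}x_i\log x_i+\frac1\rho x^\top|\mathbf{A}|(y\circ y)$. Let $\delta>0$, let $\bar{x}\in\Delta^m$ have strictly positive entries, let $y\in[0,1]^n$, and let $x=\mathcal{O}_\delta(\bar{x})$. Set $\bar z=(\bar x,y)$ and $z=(x,y)$. Then for every $w\in\Delta^m\times[0,1]^n$, $$V^r_z(w)-V^r_{\bar z}(w)\le\Big(\rho+\frac8\rho\Big)m\delta.$$
   Context: Padding oracle: for $\delta>0$ and $\bar x\in\Delta^m$, $\mathcal{O}_\delta(\bar x)=\hat x/\|\hat x\|_1$ where $\hat x_i=\max(\bar x_i,\delta)$. $V^r_{z'}(w)=r(w)-r(z')-\langle\nabla r(z'),w-z'\rangle$ is the Bregman divergence, with the convention $0\log 0=0$. $\|\mathbf{A}\|_\infty=\max_i\sum_j|\mathbf{A}_{ij}|$; $|\mathbf{A}|$ is entrywise absolute value and $y\circ y$ the entrywise square; $\Delta^m$ is the probability simplex. *)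

(* Defs.v *)
From HB Require Import structures.
From mathcomp Require Import all_boot all_order all_algebra.
From mathcomp Require Import all_classical all_reals all_analysis.
Set Implicit Arguments. Unset Strict Implicit. Unset Printing Implicit Defensive.
Import Order.TTheory GRing.Theory Num.Theory.
Local Open Scope ring_scope.

Section Defs.
Variable R : realType.

Definition normInf (m n : nat) (A : 'M[R]_(m, n)) : R :=
  \big[Num.max/0]_(i < m) \sum_(j < n) `|A i j|.

Definition simplex (m : nat) (x : 'I_m -> R) : Prop :=
  (forall i, 0 <= x i) /\ \sum_(i < m) x i = 1.

Definition unit_box (n : nat) (y : 'I_n -> R) : Prop :=
  forall j, 0 <= y j <= 1.

Definition pad (m : nat) (delta : R) (xbar : 'I_m -> R) : 'I_m -> R :=
  fun i => Num.max (xbar i) delta / \sum_(k < m) Num.max (xbar k) delta.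

(* r(x,y) = rho sum_i x_i log x_i + (1/rho) x^T |A| (y o y);
   note ln 0 = 0 in MathComp-Analysis, giving the convention 0 log 0 = 0. *)
Definition rfun (m n : nat) (A : 'M[R]_(m, n)) (rho : R)
    (x : 'I_m -> R) (y : 'I_n -> R) : R :=
  rho * \sum_(i < m) x i * ln (x i)
  + rho^-1 * \sum_(i < m) \sum_(j < n) x i * `|A i j| * (y j ^+ 2).

(* partial derivatives of r (valid at points with x > 0) *)
Definition grad_x (m n : nat) (A : 'M[R]_(m, n)) (rho : R)
    (x : 'I_m -> R) (y : 'I_n -> R) (i : 'I_m) : R :=
  rho * (ln (x i) + 1) + rho^-1 * \sum_(j < n) `|A i j| * (y j ^+ 2).

Definition grad_y (m n : nat) (A : 'M[R]_(m, n)) (rho : R)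
    (x : 'I_m -> R) (y : 'I_n -> R) (j : 'I_n) : R :=
  rho^-1 * (2 * \sum_(i < m) x i * `|A i j| * y j).

Definition breg (m n : nat) (A : 'M[R]_(m, n)) (rho : R)
    (x' : 'I_m -> R) (y' : 'I_n -> R) (x : 'I_m -> R) (y : 'I_n -> R) : R :=
  rfun A rho x y - rfun A rho x' y'
  - (\sum_(i < m) grad_x A rho x' y' i * (x i - x' i)
     + \sum_(j < n) grad_y A rho x' y' j * (y j - y' j)).

End Defs.

(* Main.v *)
Require Import Defs.
From HB Require Import structures.
From mathcomp Require Import all_boot all_order all_algebra.
From mathcomp Require Import all_classical all_reals all_analysis.
From mathcomp Require Import ring lra.
Import Order.TTheory GRing.Theory Num.Theory.
Set Implicit Arguments. Unset Strict Implicit.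
Local Open Scope ring_scope.

Definition sA (R : realType) m n (A : 'M[R]_(m, n)) (y : 'I_n -> R) (i : 'I_m) : R :=
  \sum_(j < n) `|A i j| * y j ^+ 2.

Lemma dsum_sA (R : realType) m n (A : 'M[R]_(m, n)) (y : 'I_n -> R) (v : 'I_m -> R) :
  \sum_(i < m) \sum_(j < n) v i * `|A i j| * (y j ^+ 2) = \sum_(i < m) v i * sA A y i.
Proof.
apply: eq_bigr => i _; rewrite /sA mulr_sumr; apply: eq_bigr => j _; ring.
Qed.

Lemma L1 (R : realType) m n (A : 'M[R]_(m, n)) rho (x' w : 'I_m -> R) (y : 'I_n -> R) :
  rfun A rho x' y + \sum_(i < m) grad_x A rho x' y i * (w i - x' i)
  = rho * (\sum_(i < m) w i * ln (x' i)) + rho * (\sum_(i < m) w i - \sum_(i < m) x' i)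
    + rho^-1 * \sum_(i < m) \sum_(j < n) w i * `|A i j| * (y j ^+ 2).
Proof.
rewrite /rfun !dsum_sA.
have -> : \sum_(i < m) grad_x A rho x' y i * (w i - x' i)
   = \sum_(i < m) (rho * (ln (x' i) + 1) + rho^-1 * sA A y i) * (w i - x' i) by [].
move: (sA A y) => s.
rewrite -!sumrB !mulr_sumr -!big_split /=; apply: eq_bigr => i _; ring.
Qed.

Lemma GYdiff (R : realType) m n (A : 'M[R]_(m, n)) rho (xb x : 'I_m -> R) (y w2 : 'I_n -> R) :
  0 < rho -> normInf A <= 1 -> unit_box y -> unit_box w2 ->
  \sum_(j < n) grad_y A rho xb y j * (w2 j - y j) - \sum_(j < n) grad_y A rho x y j * (w2 j - y j)
  <= rho^-1 * 2 * \sum_(i < m) `|xb i - x i|.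
Proof.
move=> rp nA hy hw.
rewrite -sumrB.
have e : forall j, grad_y A rho xb y j * (w2 j - y j) - grad_y A rho x y j * (w2 j - y j)
   = rho^-1 * 2 * \sum_(i < m) ((xb i - x i) * `|A i j| * y j * (w2 j - y j)).
  move=> j; rewrite /grad_y.
  have -> : \sum_(i < m) ((xb i - x i) * `|A i j| * y j * (w2 j - y j))
     = (\sum_(i < m) xb i * `|A i j| * y j - \sum_(i < m) x i * `|A i j| * y j) * (w2 j - y j).
    by rewrite -sumrB mulr_suml; apply: eq_bigr => i _; ring.
  ring.
under eq_bigr => j _ do rewrite e.
rewrite -mulr_sumr; have rp' : 0 <= rho^-1 * 2 by apply: mulr_ge0; [rewrite invr_ge0 ltW | ].
apply: (@le_trans _ _ (rho^-1 * 2 * \sum_(j < n) \sum_(i < m) `|xb i - x i| * `|A i j|)).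
  apply: ler_wpM2l => //; apply: ler_sum => j _; apply: ler_sum => i _.
  apply: (le_trans (ler_norm _)); rewrite !normrM normr_id.
  have [y0 y1] := andP (hy j); have [w0 w1] := andP (hw j).
  have h1 : `|y j| <= 1 by rewrite ger0_norm.
  have h2 : `|w2 j - y j| <= 1 by rewrite ler_norml; apply/andP; split; lra.
  have h3 : 0 <= `|xb i - x i| * `|A i j| by apply: mulr_ge0.
  rewrite -mulrA -[X in _ <= X]mulr1; apply: ler_wpM2l => //.
  have := normr_ge0 (y j); have := normr_ge0 (w2 j - y j); nra.
apply: ler_wpM2l => //.
rewrite exchange_big /=; apply: ler_sum => i _.
rewrite -mulr_sumr -[X in _ <= X]mulr1; apply: ler_wpM2l => //.
apply: le_trans nA; rewrite /normInf.
exact: (le_bigmax (0 : R) (fun i => \sum_(j < n) `|A i j|) i).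
Qed.

Theorem mainTheorem3 (R : realType) (m n : nat) (A : 'M[R]_(m, n)) (rho delta : R)
    (xbar : 'I_m -> R) (y : 'I_n -> R) (w1 : 'I_m -> R) (w2 : 'I_n -> R) :
  normInf A <= 1 -> 0 < rho -> 0 < delta ->
  simplex xbar -> (forall i, 0 < xbar i) -> unit_box y ->
  simplex w1 -> unit_box w2 ->
  breg A rho (pad delta xbar) y w1 w2 - breg A rho xbar y w1 w2
    <= (rho + 8 / rho) * m%:R * delta.
Proof.
move=> nA rp dp [xb0 xb1] xbp hy [w0 ws] hw.
set x := pad delta xbar.
set M := fun i => Num.max (xbar i) delta.
set S := \sum_(i < m) M i.
have Mge i : xbar i <= M i by rewrite /M le_max lexx.
have Mgd i : delta <= M i by rewrite /M le_max lexx orbT.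
have Mle i : M i <= xbar i + delta.
  by rewrite /M ge_max; apply/andP; split; have := xbp i; lra.
have Mp i : 0 < M i by apply: lt_le_trans (Mgd i).
have S1 : 1 <= S by rewrite -xb1; apply: ler_sum => i _.
have S2 : S <= 1 + m%:R * delta.
  apply: (le_trans (ler_sum _ (fun i _ => Mle i))).
  by rewrite big_split /= xb1 sumr_const card_ord mulr_natl.
have Sp : 0 < S by lra.
have xE i : x i = M i / S by [].
have xS : \sum_(i < m) x i = 1.
  by rewrite /x /pad -mulr_suml -/S divff // gt_eqF.
have Dbreg : breg A rho x y w1 w2 - breg A rho xbar y w1 w2
   = (rfun A rho xbar y + \sum_(i < m) grad_x A rho xbar y i * (w1 i - xbar i))
   - (rfun A rho x y + \sum_(i < m) grad_x A rho x y i * (w1 i - x i))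
   + (\sum_(j < n) grad_y A rho xbar y j * (w2 j - y j)
      - \sum_(j < n) grad_y A rho x y j * (w2 j - y j)) by rewrite /breg; ring.
rewrite Dbreg !L1 xS xb1 ws subrr mulr0 !addr0.
have GY := @GYdiff R m n A rho xbar x y w2 rp nA hy hw.
have Hln : \sum_(i < m) w1 i * ln (xbar i) - \sum_(i < m) w1 i * ln (x i) <= m%:R * delta.
  rewrite -sumrB.
  have -> : m%:R * delta = \sum_(i < m) w1 i * (m%:R * delta) by rewrite -mulr_suml ws mul1r.
  apply: ler_sum => i _; rewrite -mulrBr; apply: ler_wpM2l => //.
  rewrite xE ln_div ?posrE //.
  have h1 : ln (xbar i) <= ln (M i) by rewrite ler_ln ?posrE.
  have h2 : ln S <= S - 1.
    have := @le_ln1Dx _ (S - 1); rewrite (_ : 1 + (S - 1) = S); [apply; lra | ring].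
  lra.
have Hd : \sum_(i < m) `|xbar i - x i| <= 2 * (m%:R * delta).
  apply: (@le_trans _ _ (\sum_(i < m) (delta + xbar i * (m%:R * delta)))).
    apply: ler_sum => i _.
    have pS : x i * S = M i by rewrite xE divfK // gt_eqF.
    have p0 : 0 <= x i by rewrite xE divr_ge0 // ltW.
    have X0 := xbp i; have Mg := Mge i; have Ml := Mle i.
    have hX : 0 <= xbar i * (S - 1 - m%:R * delta) -> False \/ True by right.
    have hX2 : xbar i * (S - 1) <= xbar i * (m%:R * delta).
      by apply: ler_wpM2l; [apply: ltW | lra].
    rewrite ler_norml; apply/andP; split.
      have [hp|hp] := lerP (x i) (xbar i); first by nra.
      have : (x i - xbar i) * (S - 1) >= 0 by apply: mulr_ge0; lra.
      nra.
    have [hp|hp] := lerP (x i) (xbar i); last by nra.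
    have : (xbar i - x i) * (S - 1) >= 0 by apply: mulr_ge0; lra.
    nra.
  rewrite big_split /= sumr_const card_ord -mulr_suml xb1 mulr_natl -mulr_natl; lra.
have k0 : 0 < rho^-1 by rewrite invr_gt0.
have t0 : 0 <= m%:R * delta by apply: mulr_ge0; [apply: ler0n | apply: ltW].
set t := m%:R * delta in Hln Hd t0 *.
set k := rho^-1 in GY k0 *.
set a := \sum_(i < m) w1 i * ln (xbar i) in Hln *.
set b := \sum_(i < m) w1 i * ln (x i) in Hln *.
set c := \sum_(i < m) `|xbar i - x i| in GY Hd.
have e1 : k * 2 * c <= k * (4 * t).
  rewrite -mulrA; apply: ler_wpM2l; [exact: ltW | lra].
have e2 : rho * a - rho * b <= rho * t.
  rewrite -mulrBr; apply: ler_wpM2l; [exact: ltW | lra].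
have e3 : k * (4 * t) <= 8 * k * t.
  rewrite mulrCA mulrA; apply: ler_wpM2r => //; lra.
rewrite /k in e1 e2 e3 GY k0.
rewrite -mulrA -/t.
rewrite (_ : (rho + 8 / rho) * t = rho * t + 8 * rho^-1 * t); last by rewrite mulrDl.
lra.
Qed.
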